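(* For any frozen activation pattern $R$, the unique harmonic extension of the boundary data satisfies $z^{(\ell)*} = \overline{W}^{(\ell)}\overline{a}^{(\ell-1)*}$ and $a^{(\ell)*} = R^{(\ell)}\,z^{(\ell)*}$ for all layers, with $\hat{y}^* = z^{(k+1)*}$. In particular, when $\overline{\mathbf{a}}^{(0)}$ is fixed to $\overline{\mathbf{x}}$, only the forward-pass activation pattern (i.e. $\mathbf{z}^{(\ell)}=W^{(\ell)}\mathbf{a}^{(\ell-1)}+b^{(\ell)}$, $\mathbf{a}^{(\ell)}=\mathrm{ReLU}(\mathbf{z}^{(\ell)})$) produces a harmonic extension that is also a global section.
   Context: Consider a feedforward ReLU network with $k$ hidden layers, widths $n_0,\dots,n_{k+1}$, weights $W^{(\ell)}$, biases $b^{(\ell)}$, identity output activation. Define $\overline{W}^{(\ell)} = (W^{(\ell)}\mid \mathrm{diag}(b^{(\ell)}))$, $\overline{a}^{(\ell)} = (a^{(\ell)}, \mathbf{1}_{n_{\ell+1}})$, $\overline{a}^{(0)}=\overline{\mathbf{x}}=(\mathbf{x},\mathbf{1}_{n_1})$. A cellular sheaf is built on the path graph $v_x - v_{z^{(1)}} - v_{a^{(1)}} - \cdots - v_{a^{(k)}} - v_{z^{(k+1)}} - v_y$; writing $\mathcal{F}_{v,e}$ for the restriction map from vertex $v$ to incident edge $e$, the weight edge from $v_{a^{(\ell-1)}}$ to $v_{z^{(\ell)}}$ has maps $\overline{W}^{(\ell)}$ and $I$, the activation edge from $v_{z^{(\ell)}}$ to $v_{a^{(\ell)}}$ has maps $R^{(\ell)}$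 (diagonal $0/1$) and the projection $P_{n_\ell}=(I_{n_\ell}\ 0)$, and the output edge from $v_{z^{(k+1)}}$ to $v_y$ has maps $I$ and $I$. The coboundary is $(\delta x)_e=\mathcal{F}_{v,e}x_v-\mathcal{F}_{u,e}x_u$ for $e=u\to v$. The boundary data $u$ consists of the input stalk at $v_x$ and the ones blocks in each $v_{a^{(\ell)}}$ stalk; the free coordinates are $\omega=(z^{(1)},a^{(1)},\dots,z^{(k+1)},\hat y)$. The harmonic extension is the minimizer of $\|\delta\overline{\omega}\|^2$ over $\omega$ with the boundary data fixed; it is unique because the restricted coboundary $\delta_\Omega$ is unitriangular (determinant 1). In the actual (state-dependent) sheaf, $R^{(\ell)}_{jj}=1$ iff the current $z^{(\ell)}_j\ge 0$; a global section is a cochain with $\delta\overline{\omega}=0$. Uniqueness of the self-consistent pattern assumes no pre-activation coordinate vanishes (a generic condition in the weights). *)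

(* Defs.v *)
From mathcomp Require Import all_boot all_order all_algebra.
Set Implicit Arguments. Unset Strict Implicit. Unset Printing Implicit Defensive.
Import Order.TTheory GRing.Theory Num.Theory.
Local Open Scope ring_scope.

(* Network: widths n 0, ..., n (k+1); weight edge l (l = 0..k) carries
   W^(l+1) = W l : n(l+1) x n(l) and b^(l+1) = b l. Values of W, b, n beyond
   index k are never used. *)

Section Sheaf.
Variable R : realFieldType.
Variable n : nat -> nat.
Variable k : nat.

Definition Wbar (W : forall l : nat, 'M[R]_(n l.+1, n l))
  (b : forall l : nat, 'cV[R]_(n l.+1)) (l : nat) : 'M[R]_(n l.+1, n l + n l.+1) :=
  row_mx (W l) (diag_mx (b l)^T).

Definition Pproj (p q : nat) : 'M[R]_(p, p + q) := row_mx 1%:M 0.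

Definition Rmat (m : nat) (r : 'I_m -> bool) : 'M[R]_m := diag_mx (\row_j (r j)%:R).

Definition ordSucc (i : 'I_k) : 'I_k.+1 := @Ordinal k.+1 i.+1 (ltn_ord i).
Definition ordW (i : 'I_k) : 'I_k.+1 := widen_ord (leqnSn k) i.

(* Cochains on the vertices of the path graph
   v_x - v_z1 - v_a1 - ... - v_ak - v_z(k+1) - v_y :
   va 0 is the stalk at v_x (= xbar), va i (1<=i<=k) the stalk at v_{a^(i)}
   (= abar^(i) in R^{n_i + n_{i+1}}); vz i is the stalk at v_{z^(i+1)};
   vy the stalk at v_y. *)
Record cochain := Cochain {
  va : forall i : 'I_k.+1, 'cV[R]_(n i + n i.+1);
  vz : forall i : 'I_k.+1, 'cV[R]_(n i.+1);
  vy : 'cV[R]_(n k.+1) }.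

(* frozen activation pattern: R^{(i+1)} for i < k *)
Definition pattern := forall i : 'I_k, 'I_(n i.+1) -> bool.

Section Cob.
Variable W : forall l : nat, 'M[R]_(n l.+1, n l).
Variable b : forall l : nat, 'cV[R]_(n l.+1).

(* (delta x)_e = F_{v,e} x_v - F_{u,e} x_u for e = u -> v *)
(* weight edge v_{a^(i)} -> v_{z^(i+1)} *)
Definition weight_cob (c : cochain) (i : 'I_k.+1) : 'cV[R]_(n i.+1) :=
  1%:M *m vz c i - Wbar W b i *m va c i.
(* activation edge v_{z^(i+1)} -> v_{a^(i+1)} *)
Definition act_cob (r : pattern) (c : cochain) (i : 'I_k) : 'cV[R]_(n i.+1) :=
  Pproj (n i.+1) (n i.+2) *m va c (ordSucc i) - Rmat (r i) *m vz c (ordW i).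
(* output edge v_{z^(k+1)} -> v_y *)
Definition out_cob (c : cochain) : 'cV[R]_(n k.+1) :=
  1%:M *m vy c - 1%:M *m vz c ord_max.

Definition sqnorm (m : nat) (v : 'cV[R]_m) : R := \sum_(j < m) v j 0 ^+ 2.

Definition energy (r : pattern) (c : cochain) : R :=
  \sum_(i < k.+1) sqnorm (weight_cob c i)
  + \sum_(i < k) sqnorm (act_cob r c i) + sqnorm (out_cob c).

Definition boundary (x : 'cV[R]_(n 0%N)) (c : cochain) : Prop :=
  usubmx (va c ord0) = x /\ forall i : 'I_k.+1, dsubmx (va c i) = const_mx 1.

Definition harmonic_ext (x : 'cV[R]_(n 0%N)) (r : pattern) (c : cochain) : Prop :=
  boundary x c /\ forall c', boundary x c' -> energy r c <= energy r c'.

Definition global_section (r : pattern) (c : cochain) : Prop :=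
  (forall i, weight_cob c i = 0) /\ (forall i, act_cob r c i = 0) /\ out_cob c = 0.

Definition state_pattern (c : cochain) : pattern :=
  fun i j => 0 <= vz c (ordW i) j 0.

Definition relu (m : nat) (v : 'cV[R]_m) : 'cV[R]_m := map_mx (fun t => Num.max t 0) v.

(* forward pass: fwd_a x l = a^(l), fwd_z x l = z^(l+1) *)
Fixpoint fwd_a (x : 'cV[R]_(n 0%N)) (l : nat) : 'cV[R]_(n l) :=
  match l return 'cV[R]_(n l) with
  | 0 => x
  | l'.+1 => relu (W l' *m fwd_a x l' + b l')
  end.
Definition fwd_z (x : 'cV[R]_(n 0%N)) (l : nat) : 'cV[R]_(n l.+1) :=
  W l *m fwd_a x l + b l.

Definition fwd_pattern (x : 'cV[R]_(n 0%N)) : pattern :=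
  fun i j => 0 <= fwd_z x i j 0.

End Cob.
End Sheaf.

Arguments fwd_pattern {R n k} W b x i j.
Arguments state_pattern {R n k} c i j.

(* Main.v *)
Require Import Defs.
From mathcomp Require Import all_boot all_order all_algebra.
From Stdlib Require Import FunctionalExtensionality.
Import Order.TTheory GRing.Theory Num.Theory.
Local Open Scope ring_scope.
Set Implicit Arguments. Unset Strict Implicit.

Section H.
Variable R : realFieldType.
Variable n : nat -> nat.
Variable k : nat.
Variable W : forall l : nat, 'M[R]_(n l.+1, n l).
Variable b : forall l : nat, 'cV[R]_(n l.+1).
Variable x : 'cV[R]_(n 0%N).

Lemma sqnorm_ge0 m (v : 'cV[R]_m) : 0 <= sqnorm v.
Proof. by apply: sumr_ge0 => i _; apply: sqr_ge0. Qed.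

Lemma sqnorm_eq0 m (v : 'cV[R]_m) : sqnorm v = 0 -> v = 0.
Proof.
move=> h; apply/matrixP => i j; rewrite ord1 mxE.
have /eqP := psumr_eq0P (fun i _ => sqr_ge0 (v i 0)) h (isT : true) (i:=i).
by rewrite sqrf_eq0 => /eqP.
Qed.

Lemma sqnorm0 m : sqnorm (0 : 'cV[R]_m) = 0.
Proof. by rewrite /sqnorm big1 // => i _; rewrite mxE expr0n. Qed.

Definition fw (r : pattern n k) (c : cochain R n k) : Prop :=
  (forall i : 'I_k.+1, vz c i = Wbar W b i *m va c i) /\
  (forall i : 'I_k, usubmx (va c (ordSucc i)) = Rmat R (r i) *m vz c (ordW i)) /\
  vy c = vz c ord_max.

Lemma Pproj_mul p q (v : 'cV[R]_(p + q)) : Pproj R p q *m v = usubmx v.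
Proof. by rewrite /Pproj -{1}(vsubmxK v) mul_row_col mul1mx mul0mx addr0. Qed.

Lemma gs_fw r (c : cochain R n k) : global_section W b r c <-> fw r c.
Proof.
rewrite /global_section /fw /weight_cob /act_cob /out_cob; split.
  case=> [h1 [h2 h3]]; split; [|split].
  - by move=> i; apply/eqP; rewrite -subr_eq0 -(mul1mx (vz c i)) h1.
  - by move=> i; apply/eqP; rewrite -subr_eq0 -Pproj_mul h2.
  - by apply/eqP; rewrite -subr_eq0 -(mul1mx (vy c)) -(mul1mx (vz c _)) h3.
case=> [h1 [h2 h3]]; split; [|split].
- by move=> i; rewrite mul1mx h1 subrr.
- by move=> i; rewrite Pproj_mul h2 subrr.
- by rewrite !mul1mx h3 subrr.
Qed.

Lemma energy_ge0 r (c : cochain R n k) : 0 <= energy W b r c.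
Proof.
by rewrite /energy !addr_ge0 ?sqnorm_ge0 // sumr_ge0 // => i _; apply: sqnorm_ge0.
Qed.

Lemma energy_eq0 r (c : cochain R n k) : energy W b r c = 0 <-> global_section W b r c.
Proof.
split.
  have g1 : 0 <= \sum_(i < k.+1) sqnorm (weight_cob W b c i).
    by apply: sumr_ge0 => i _; apply: sqnorm_ge0.
  have g2 : 0 <= \sum_(i < k) sqnorm (act_cob r c i).
    by apply: sumr_ge0 => i _; apply: sqnorm_ge0.
  have g3 := sqnorm_ge0 (out_cob c).
  rewrite /energy => /eqP; rewrite paddr_eq0 ?addr_ge0 // paddr_eq0 //.
  case/andP => /andP [/eqP h1 /eqP h2] /eqP h3; split; [|split].
  - by move=> i; apply: sqnorm_eq0; apply: (psumr_eq0P _ h1) => // j _; apply: sqnorm_ge0.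
  - by move=> i; apply: sqnorm_eq0; apply: (psumr_eq0P _ h2) => // j _; apply: sqnorm_ge0.
  - by apply: sqnorm_eq0.
case=> [h1 [h2 h3]]; rewrite /energy h3 sqnorm0 addr0 !big1 ?addr0 // => i _.
  by rewrite h2 sqnorm0.
by rewrite h1 sqnorm0.
Qed.


Unset Implicit Arguments.
Section Ex.
Variable r : pattern n k.

Definition rn (l : nat) : 'I_(n l.+1) -> bool :=
  (if (l < k)%N as t return ((l < k)%N = t) -> 'I_(n l.+1) -> bool
   then fun h => r (Ordinal h) else fun _ _ => false) (erefl _).

Lemma rnE (i : 'I_k) : rn i = r i.
Proof.
case: i => i hi; rewrite /rn /=.
move: (erefl (i < k)%N); rewrite {2 3}hi => e.
by rewrite (bool_irrelevance e hi).
Qed.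

Fixpoint ga (l : nat) : 'cV[R]_(n l) :=
  match l return 'cV[R]_(n l) with
  | 0 => x
  | l'.+1 => Rmat R (rn l') *m (W l' *m ga l' + b l')
  end.

Definition c0 : cochain R n k :=
  Cochain (fun i : 'I_k.+1 => col_mx (ga i) (const_mx 1))
          (fun i : 'I_k.+1 => W i *m ga i + b i) (W k *m ga k + b k).

End Ex.
Set Implicit Arguments.

Lemma Wbar_mul l (v : 'cV[R]_(n l + n l.+1)) : dsubmx v = const_mx 1 ->
  Wbar W b l *m v = W l *m usubmx v + b l.
Proof.
move=> hd; rewrite /Wbar -{1}(vsubmxK v) mul_row_col hd; congr (_ + _).
by apply/matrixP => i j; rewrite ord1 mul_diag_mx !mxE mulr1.
Qed.

Lemma c0_fw r : fw r (c0 r) /\ boundary x (c0 r).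
Proof.
have hb : boundary x (c0 r).
  by split => [|i] /=; rewrite ?col_mxKu ?col_mxKd.
split => //; split; [|split] => /=.
- by move=> i; rewrite Wbar_mul ?col_mxKu ?col_mxKd.
- by move=> i; rewrite col_mxKu /= rnE.
- by [].
Qed.

Lemma Rmat_mul m (r : 'I_m -> bool) (z : 'cV[R]_m) :
  Rmat R r *m z = \col_j ((r j)%:R * z j 0).
Proof. by apply/matrixP => i j; rewrite ord1 /Rmat mul_diag_mx !mxE. Qed.

Lemma Rmat_relu m (z : 'cV[R]_m) :
  Rmat R (fun j => 0 <= z j 0) *m z = relu z.
Proof.
apply/matrixP => i j; rewrite ord1 Rmat_mul !mxE.
case: (lerP 0 (z i 0)) => h.
  by rewrite mul1r.
by rewrite mul0r.
Qed.

Lemma fw_unique r (c c' : cochain R n k) :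
  boundary x c -> fw r c -> boundary x c' -> fw r c' -> c = c'.
Proof.
move=> [b1 b2] [f1 [f2 f3]] [b1' b2'] [f1' [f2' f3']].
have ha : forall l (h : (l < k.+1)%N), va c (Ordinal h) = va c' (Ordinal h).
  elim=> [|l IH] h.
    have -> : Ordinal h = ord0 by apply: val_inj.
    by rewrite -(vsubmxK (va c ord0)) -(vsubmxK (va c' ord0)) b1 b1' b2 b2'.
  have hl : (l < k)%N by [].
  have -> : Ordinal h = ordSucc (Ordinal hl) by apply: val_inj.
  rewrite -(vsubmxK (va c _)) -(vsubmxK (va c' _)) b2 b2' f2 f2' f1 f1'.
  rewrite /ordW /widen_ord /=.
  by rewrite IH.
have hva : va c = va c'.
  by apply: functional_extensionality_dep => -[l h]; apply: ha.
have hvz : vz c = vz c'.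
  by apply: functional_extensionality_dep => i; rewrite f1 f1' hva.
case: c c' hva hvz f3 f3' {ha f1 f2 b1 b2 f1' f2' b1' b2'} => [a z y] [a' z' y'] /= -> -> -> ->.
by [].
Qed.

Lemma fwd_ind (c : cochain R n k) : boundary x c ->
  (forall i, vz c i = Wbar W b i *m va c i) ->
  (forall i : 'I_k, vz c (ordW i) = fwd_z W b x i ->
      usubmx (va c (ordSucc i)) = relu (vz c (ordW i))) ->
  forall i : 'I_k.+1, vz c i = fwd_z W b x i.
Proof.
move=> [b1 b2] h2 h3.
have hz : forall l (h : (l < k.+1)%N), usubmx (va c (Ordinal h)) = fwd_a W b x l ->
    vz c (Ordinal h) = fwd_z W b x l.
  by move=> l h H; rewrite h2 Wbar_mul ?b2 // H.
have ha : forall l (h : (l < k.+1)%N), usubmx (va c (Ordinal h)) = fwd_a W b x l.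
  elim=> [|l IH] h.
    by rewrite (_ : h = ltn0Sn k) //; apply: bool_irrelevance.
  have hl : (l < k)%N by [].
  rewrite (_ : h = (ltn_ord (Ordinal hl) : (l.+1 < k.+1)%N)); last exact: bool_irrelevance.
  change (usubmx (va c (ordSucc (Ordinal hl))) = relu (fwd_z W b x l)).
  have e : vz c (ordW (Ordinal hl)) = fwd_z W b x l.
    by rewrite /ordW /widen_ord /=; apply: hz; apply: IH.
  by rewrite h3 // e.
by case=> l h; apply: hz; apply: ha.
Qed.

Lemma harm_fw r (c : cochain R n k) : harmonic_ext W b x r c -> fw r c.
Proof.
move=> [hb hm]; have [f0 b0] := c0_fw r.
have e0 : energy W b r (c0 r) = 0 by apply/energy_eq0/gs_fw.
have := hm _ b0; rewrite e0 => hle.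
apply/gs_fw/energy_eq0; apply/le_anti; rewrite hle energy_ge0 //.
Qed.

Lemma harm_ex r : harmonic_ext W b x r (c0 r).
Proof.
have [f0 b0] := c0_fw r; split => // c' _.
have -> : energy W b r (c0 r) = 0 by apply/energy_eq0/gs_fw.
exact: energy_ge0.
Qed.

End H.

Theorem proposition3p4 (R : realFieldType) (n : nat -> nat) (k : nat)
  (W : forall l : nat, 'M[R]_(n l.+1, n l)) (b : forall l : nat, 'cV[R]_(n l.+1))
  (x : 'cV[R]_(n 0%N)) :
  (forall r : pattern n k,
     (exists c, harmonic_ext W b x r c) /\
     (forall c c', harmonic_ext W b x r c -> harmonic_ext W b x r c' -> c = c') /\
     (forall c, harmonic_ext W b x r c ->
        (forall i : 'I_k.+1, vz c i = Wbar W b i *m va c i) /\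
        (forall i : 'I_k, usubmx (va c (ordSucc i)) = Rmat R (r i) *m vz c (ordW i)) /\
        vy c = vz c ord_max))
  /\
  ((forall (i : 'I_k) (j : 'I_(n i.+1)), fwd_z W b x i j 0 != 0) ->
   forall (r : pattern n k) (c : cochain R n k), harmonic_ext W b x r c ->
     (global_section W b (state_pattern c) c <->
      forall (i : 'I_k) (j : 'I_(n i.+1)), r i j = fwd_pattern W b x i j)).
Proof.
split.
  move=> r; split; [|split].
  - by exists (c0 R n k W b x r); apply: harm_ex.
  - move=> c c' h h'; apply: (fw_unique _ (harm_fw h) _ (harm_fw h')).
      exact: h.1.
    exact: h'.1.
  - by move=> c h; exact: (harm_fw h).
move=> hgen r c hc.
have [f1 [f2 f3]] := harm_fw hc.
have hb : boundary x c by case: hc.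
split.
  move=> /gs_fw [s1 [s2 s3]].
  have hvz := fwd_ind hb f1 (fun i _ => etrans (s2 i) (Rmat_relu _)).
  move=> i j.
  have := congr1 (fun M : 'cV[R]_(n i.+1) => M j 0) (etrans (esym (f2 i)) (s2 i)).
  rewrite !Rmat_mul !mxE.
  have ez : vz c (ordW i) = fwd_z W b x i := hvz (ordW i).
  rewrite /state_pattern /fwd_pattern ez => /mulIf => /(_ (hgen i j)).
  by case: (r i j); case: (0 <= _) => //= /eqP; rewrite ?oner_eq0 // eq_sym oner_eq0.
move=> hr.
have hvz : forall i, vz c i = fwd_z W b x i.
  apply: fwd_ind hb f1 _ => i e.
  rewrite f2 -Rmat_relu; congr (Rmat R _ *m _).
  by apply: functional_extensionality => j; rewrite hr /fwd_pattern e.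
apply/gs_fw; split => //; split => // i.
rewrite f2; congr (Rmat R _ *m _).
apply: functional_extensionality => j.
by rewrite hr /fwd_pattern /state_pattern (hvz (ordW i)).
Qed.
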